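(* For every integer $n\ge 1$, $$\sum_{i=1}^{2^{n}}e(i)=\frac{1}{36}\Bigl((6n-7)2^{n+2}+18n+27+(-1)^{n}\Bigr).$$
   Context: The Stern polynomials $B_n(t)\in\mathbb{Z}[t]$, $n\ge 0$, are defined by $B_0(t)=0$, $B_1(t)=1$, $B_{2n}(t)=tB_n(t)$ and $B_{2n+1}(t)=B_n(t)+B_{n+1}(t)$ for $n\ge 1$. For $n\ge 1$, $e(n)=\deg_t B_n(t)$. *)

(* Defs.v *)
From HB Require Import structures.
From mathcomp Require Import all_boot all_order all_algebra.
Set Implicit Arguments. Unset Strict Implicit. Unset Printing Implicit Defensive.
Import Order.TTheory GRing.Theory Num.Theory.
Local Open Scope ring_scope.

Fixpoint stern_fuel (k n : nat) : {poly int} :=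
  match k with
  | 0 => 0
  | k'.+1 =>
      if n == 0%N then 0
      else if n == 1%N then 1
      else if odd n then stern_fuel k' n./2 + stern_fuel k' (n./2).+1
      else 'X * stern_fuel k' n./2
  end.

(* Stern polynomial B_n(t) in Z[t]; fuel n suffices since arguments strictly decrease. *)
Definition stern (n : nat) : {poly int} := stern_fuel n n.

(* e(n) = deg_t B_n(t); degree = size - 1 in MathComp. *)
Definition e (n : nat) : nat := (size (stern n)).-1.

Lemma stern0 : stern 0 = 0. Proof. by []. Qed.

(* Main.v *)
Require Import Defs.
From HB Require Import structures.
From mathcomp Require Import all_boot all_order all_algebra.
From mathcomp Require Import zify ring.
Import Order.TTheory GRing.Theory Num.Theory.
Local Open Scope ring_scope.

Lemma fuelE k k' n : (n <= k)%N -> (n <= k')%N -> stern_fuel k n = stern_fuel k' n.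
Proof.
elim: k k' n => [|k IH] [|k'] n /=; rewrite ?leqn0.
- by move=> /eqP->.
- by move=> /eqP->.
- by move=> _ /eqP->.
move=> hk hk'.
case: eqP => // /eqP n0; case: eqP => // /eqP n1.
have := odd_double_half n; rewrite -mul2n => hn.
case: ifP => ho; rewrite ho /= in hn.
- by rewrite (IH k') ?(IH k' n./2.+1) //; lia.
- by rewrite (IH k') //; lia.
Qed.

Lemma sternS n : (2 <= n)%N -> stern n =
  if odd n then stern n./2 + stern n./2.+1 else 'X * stern n./2.
Proof.
move=> n2; rewrite /stern; case: n n2 => [|n] // n2.
rewrite [in LHS]/= -[uphalf n]/(n.+1./2) -[~~ odd n]/(odd n.+1).
have := odd_double_half n.+1; rewrite -mul2n => hn.
have -> : (n.+1 == 1%N) = false by lia.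
case: ifP => ho; rewrite ho /= in hn.
- by rewrite (fuelE n (n.+1./2)) ?(fuelE n (n.+1./2.+1)) //; lia.
- by rewrite (fuelE n (n.+1./2)) //; lia.
Qed.

Lemma stern_even k : (0 < k)%N -> stern k.*2 = 'X * stern k.
Proof. by move=> k0; rewrite sternS ?odd_double ?doubleK //; lia. Qed.

Lemma half_dS k : (k.*2.+1)./2 = k.
Proof. by rewrite -[k.*2.+1]/(true + k.*2)%N half_bit_double. Qed.

Lemma stern_odd k : (0 < k)%N -> stern k.*2.+1 = stern k + stern k.+1.
Proof. move=> k0; rewrite sternS; last lia. by rewrite /= odd_double /= uphalf_double. Qed.

Definition nonneg (p : {poly int}) := forall i, 0 <= p`_i.

Lemma size_addP p q : nonneg p -> nonneg q -> size (p + q) = maxn (size p) (size q).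
Proof.
move=> hp hq; apply/eqP; rewrite eqn_leq size_add /= geq_max.
have H : forall p q, nonneg p -> nonneg q -> (size p <= size (p + q)%R)%N.
  move=> a b ha hb; have [->|a0] := eqVneq a 0; first by rewrite size_poly0.
  have sa : (0 < size a)%N by rewrite size_poly_gt0.
  rewrite -(prednK sa) ltnNge; apply/negP => /leq_sizeP /(_ _ (leqnn _)).
  rewrite coefD => h.
  have l0 : a`_(size a).-1 != 0.
    by have := lead_coef_eq0 a; rewrite /lead_coef => ->.
  have := hb (size a).-1; have := ha (size a).-1; move: l0 h; lia.
by rewrite H //= addrC H.
Qed.

Lemma stern_pos n : (0 < n)%N -> stern n != 0 /\ nonneg (stern n).
Proof.
elim/ltn_ind: n => n IH n0.
have [n1|n2] := leqP n 1.
  have -> : n = 1%N by lia.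
  by rewrite /stern /=; split => [|i]; rewrite ?oner_eq0 // coefC; case: eqP.
have := odd_double_half n; case ho: (odd n) => /= hn.
- have k0 : (0 < n./2)%N by lia.
  rewrite -hn stern_odd //.
  have [a1 a2] := IH n./2 ltac:(lia) k0.
  have [b1 b2] := IH n./2.+1 ltac:(lia) ltac:(lia).
  split; last by move=> i; rewrite coefD; apply: addr_ge0.
  rewrite -size_poly_eq0 size_addP // -lt0n leq_max !lt0n !size_poly_eq0 a1 //.
- have k0 : (0 < n./2)%N by lia.
  rewrite -hn add0n stern_even //.
  have [a1 a2] := IH n./2 ltac:(lia) k0.
  split; first by rewrite mulf_neq0 ?polyX_eq0.
  by move=> i; rewrite coefXM; case: eqP.
Qed.

Lemma e_even k : (0 < k)%N -> e k.*2 = (e k).+1.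
Proof.
move=> k0; rewrite /e stern_even // mulrC size_mulX; last by case: (@stern_pos _ k0).
rewrite prednK // size_poly_gt0; by case: (@stern_pos _ k0).
Qed.

Lemma e_odd k : (0 < k)%N -> e k.*2.+1 = maxn (e k) (e k.+1).
Proof.
move=> k0; rewrite /e stern_odd // size_addP; last by case: (@stern_pos _ (ltn0Sn k)).
  2: by case: (@stern_pos _ k0).
have := @stern_pos _ k0; have := @stern_pos _ (ltn0Sn k).
rewrite -!size_poly_eq0 => -[h1 _] [h2 _]; lia.
Qed.

Lemma e1 : e 1 = 0%N.
Proof. by rewrite /e /stern /= size_poly1. Qed.

Section Comb.
Local Close Scope ring_scope.
Lemma ediff j : (0 < j)%N -> (e j <= e j.+1 + 1)%N /\ (e j.+1 <= e j + 1)%N.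
Proof.
elim/ltn_ind: j => j IH j0.
have [j1|j2] := leqP j 1.
  have -> : j = 1%N by lia.
  by rewrite -[2%N]/(1.*2) e_even // e1.
have := odd_double_half j; case ho: (odd j) => /= hn.
- have k0 : (0 < j./2)%N by lia.
  rewrite -hn -[(_.*2).+2]/(j./2.+1).*2 e_odd // e_even //.
  have := IH j./2 ltac:(lia) k0; lia.
- have k0 : (0 < j./2)%N by lia.
  rewrite -hn add0n e_odd // e_even //.
  have := IH j./2 ltac:(lia) k0; lia.
Qed.

Lemma sum_double (F : nat -> nat) a b : (a <= b)%N ->
  (\sum_(a.*2 <= j < b.*2) F j = \sum_(a <= j < b) (F j.*2 + F j.*2.+1))%N.
Proof.
move=> /subnK <-; elim: (b - a)%N => [|k IH]; first by rewrite add0n !big_geq.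
rewrite addSn doubleS !big_nat_recr //=; try lia.
Qed.

Definition lvl (F : nat -> nat) m := (\sum_(2 ^ m <= j < 2 ^ m.+1) F j)%N.

Lemma lvlS F m : lvl F m.+1 = lvl (fun j => F j.*2 + F j.*2.+1)%N m.
Proof.
rewrite /lvl -sum_double ?leq_exp2l //.
by rewrite -!mul2n -!expnS.
Qed.

Lemma lvl_eq F G m : (forall j, (0 < j)%N -> F j = G j) -> lvl F m = lvl G m.
Proof.
move=> h; apply: eq_big_nat => j /andP[hj _]; apply: h.
exact: leq_trans (expn_gt0 2 m) hj.
Qed.

Lemma lvl_const c m : lvl (fun _ => c) m = (c * 2 ^ m)%N.
Proof. by rewrite /lvl sum_nat_const_nat expnS; lia. Qed.

Definition Zf j : nat := (e j == e j.+1).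
Definition Xf j := maxn (e j) (e j.+1).

Lemma e_even2 j : (0 < j)%N -> e (j.*2.+1).+1 = (e j.+1).+1.
Proof. by move=> j0; rewrite -doubleS e_even. Qed.

Lemma Zrec m : (lvl Zf m.+1 + lvl Zf m = 2 ^ m)%N.
Proof.
have -> : 2 ^ m = lvl (fun _ => 1) m by rewrite lvl_const mul1n.
rewrite lvlS /lvl -big_split /=.
apply: lvl_eq => j j0; rewrite /Zf e_even2 // e_even // e_odd //.
have := @ediff _ j0; do ! case: eqP; lia.
Qed.

Lemma Xrec m : lvl Xf m.+1 = (2 * lvl Xf m + 2 ^ m + lvl Zf m)%N.
Proof.
have -> : 2 * lvl Xf m + 2 ^ m + lvl Zf m = lvl (fun j => Xf j + Xf j + 1 + Zf j) m.
  rewrite /lvl !big_split /= sum_nat_const_nat expnS; lia.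
rewrite lvlS; apply: lvl_eq => j j0; rewrite /Zf /Xf e_even2 // e_even // e_odd //.
have := @ediff _ j0; case: eqP; lia.
Qed.

Lemma Srec m : lvl e m.+1 = (lvl e m + 2 ^ m + lvl Xf m)%N.
Proof.
have -> : lvl e m + 2 ^ m + lvl Xf m = lvl (fun j => e j + 1 + Xf j) m.
  rewrite /lvl !big_split /= sum_nat_const_nat expnS; lia.
rewrite lvlS; apply: lvl_eq => j j0; rewrite /Xf e_even // e_odd //; lia.
Qed.

Lemma e2 : e 2 = 1%N.
Proof. by rewrite -[2%N]/(1.*2) e_even // e1. Qed.

Lemma lvl0 F : lvl F 0 = F 1%N.
Proof. by rewrite /lvl big_nat1. Qed.

Lemma e_pow n : e (2 ^ n) = n.
Proof. by elim: n => [|n IH]; rewrite ?e1 // expnS mul2n e_even ?IH ?expn_gt0. Qed.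

Lemma cum n : (\sum_(1 <= i < 2 ^ n) e i = \sum_(m < n) lvl e m)%N.
Proof.
elim: n => [|n IH]; first by rewrite big_geq // big_ord0.
rewrite big_ord_recr /= -IH /lvl -big_cat_nat //; last by rewrite leq_exp2l.
exact: expn_gt0.
Qed.

End Comb.

Lemma Zq m : ((lvl Zf m)%:R : rat) = (2 ^+ m - (-1) ^+ m) / 3.
Proof.
elim: m => [|m IH]; first by rewrite lvl0 /Zf e1 e2.
have -> : ((lvl Zf m.+1)%:R : rat) = (lvl Zf m.+1 + lvl Zf m)%N%:R - (lvl Zf m)%:R.
  by rewrite natrD addrK.
rewrite Zrec natrX IH !exprS; by field.
Qed.

Lemma Xq m : ((lvl Xf m)%:R : rat) = ((6 * m%:R + 8) * 2 ^+ m + (-1) ^+ m) / 9.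
Proof.
elim: m => [|m IH]; first by rewrite lvl0 /Xf e1 e2.
rewrite Xrec !natrD ?natrM natrX IH Zq !exprS -addn1 natrD; by field.
Qed.

Lemma Sq m : ((lvl e m)%:R : rat) =
  (6 * m%:R + 5) * 2 ^+ m / 9 - (-1) ^+ m / 18 - 1 / 2.
Proof.
elim: m => [|m IH]; first by rewrite lvl0 e1; by field.
rewrite Srec !natrD natrX IH Xq !exprS -addn1 natrD; by field.
Qed.

Lemma Cq n : ((\sum_(m < n) lvl e m)%N%:R : rat) =
  (6 * n%:R - 7) * 2 ^+ n / 9 + (-1) ^+ n / 36 - n%:R / 2 + 3 / 4.
Proof.
elim: n => [|n IH]; first by rewrite big_ord0; by field.
rewrite big_ord_recr /= natrD IH Sq !exprS -addn1 natrD; by field.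
Qed.

Theorem corollary4p7 (n : nat) (hn : (1 <= n)%N) :
  ((\sum_(1 <= i < (2 ^ n).+1) e i)%N%:R : rat) =
  (1 / 36) * ((6 * n%:R - 7) * 2 ^+ (n + 2) + 18 * n%:R + 27 + (-1) ^+ n).
Proof.
rewrite big_nat_recr /=; last exact: expn_gt0.
rewrite natrD cum Cq e_pow exprD; by field.
Qed.
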